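(* Let $k$ be a positive integer and let $G$ be the union of a set $\mathcal L$ of $k$ pairwise edge-disjoint complete subgraphs, each with $k$ vertices (so $V(G)=\bigcup_{L\in\mathcal L}V(L)$ and $E(G)=\bigcup_{L\in\mathcal L}E(L)$). Then $\omega(G)=k$. Furthermore, if $G$ has a maximal clique of size $k$ whose vertex set is not the vertex set of a member of $\mathcal L$, then $G$ is chordal.
   Context: All graphs are finite and simple; $\omega$ is the clique number. A graph is chordal if it has no induced cycle of length at least $4$. *)

(* Defs.v *)
From mathcomp Require Import all_boot.
Set Implicit Arguments. Unset Strict Implicit. Unset Printing Implicit Defensive.

Section Graphs.
Variable T : finType.

(* A simple graph on the vertex type T is given by an adjacency relation e
   (symmetric and irreflexive in our use). *)

Definition is_clique (e : rel T) (Q : {set T}) : bool :=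
  [forall x in Q, forall y in Q, (x != y) ==> e x y].

Definition maximal_clique (e : rel T) (Q : {set T}) : bool :=
  is_clique e Q &&
  [forall R : {set T}, (is_clique e R && (Q \subset R)) ==> (R == Q)].

Definition clique_number (e : rel T) : nat :=
  \max_(Q : {set T} | is_clique e Q) #|Q|.

Definition induced_cycle (e : rel T) (s : seq T) : Prop :=
  [/\ 4 <= size s, uniq s &
      forall (x0 : T) (i j : nat), i < size s -> j < size s ->
        e (nth x0 s i) (nth x0 s j) =
        (j == i.+1 %% size s) || (i == j.+1 %% size s)].

Definition chordal (e : rel T) : Prop := forall s : seq T, ~ induced_cycle e s.

Definition union_adj (k : nat) (L : 'I_k -> {set T}) : rel T :=
  fun x y => (x != y) && [exists i, (x \in L i) && (y \in L i)].

End Graphs.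

(* Main.v *)
Require Import Defs.
From mathcomp Require Import all_boot all_order all_algebra.
From mathcomp Require Import ring lra zify.
Set Warnings "-notation-overridden -ambiguous-paths".
Set Implicit Arguments. Unset Strict Implicit. Unset Printing Implicit Defensive.
Import Order.TTheory GRing.Theory Num.Theory.
Section All.
Local Open Scope ring_scope.
Section Gram.
Variables (m n : nat) (A : 'M[rat]_(m,n)).
Definition gr (p q : 'I_m) : rat := \sum_i A p i * A q i.
Hypothesis H1 : forall p q, p != q -> gr p q = 1.
Hypothesis H2 : forall p, 1 < gr p p.

Lemma gr_eq p q : gr p q = (p == q)%:R * (gr p p - 1) + 1.
Proof.
case: eqVneq => [->|pq]; first by rewrite mul1r subrK.
by rewrite mul0r add0r H1.
Qed.

Lemma quad (v : 'rV[rat]_m) :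
  \sum_i ((v *m A) 0 i) ^+ 2 =
  \sum_p (v 0 p) ^+ 2 * (gr p p - 1) + (\sum_p v 0 p) ^+ 2.
Proof.
have -> : \sum_i ((v *m A) 0 i) ^+ 2 =
   \sum_p \sum_q v 0 p * v 0 q * gr p q.
  rewrite (eq_bigr (fun i => \sum_p \sum_q v 0 p * A p i * (v 0 q * A q i))); last first.
    move=> i _; rewrite mxE expr2 big_distrl /=; apply: eq_bigr => p _.
    by rewrite big_distrr.
  rewrite exchange_big /=; apply: eq_bigr => p _.
  rewrite exchange_big /=; apply: eq_bigr => q _.
  rewrite /gr big_distrr /=; apply: eq_bigr => i _; ring.
rewrite expr2 big_distrl /= -big_split /=; apply: eq_bigr => p _.
rewrite big_distrr /=.
rewrite (eq_bigr (fun q => v 0 p * v 0 q * ((p == q)%:R * (gr p p - 1)) + v 0 p * v 0 q)); last first.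
  by move=> q _; rewrite (gr_eq p q) mulrDr mulr1.
rewrite big_split /=; congr (_ + _).
rewrite (bigD1 p) //= eqxx big1 ?addr0; first by rewrite expr2 mul1r.
by move=> q /negbTE; rewrite eq_sym => ->; rewrite mul0r mulr0.
Qed.

Lemma ker_triv (v : 'rV[rat]_m) : v *m A = 0 -> v = 0.
Proof.
move=> hv.
have h0 : \sum_p (v 0 p) ^+ 2 * (gr p p - 1) + (\sum_p v 0 p) ^+ 2 = 0.
  by rewrite -quad hv big1 // => i _; rewrite mxE expr2 mul0r.
have ge1 : 0 <= \sum_p (v 0 p) ^+ 2 * (gr p p - 1).
  apply: sumr_ge0 => p _; apply: mulr_ge0; first exact: sqr_ge0.
  by rewrite subr_ge0 ltW.
have ge2 : 0 <= (\sum_p v 0 p) ^+ 2 by exact: sqr_ge0.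
have hs : \sum_p (v 0 p) ^+ 2 * (gr p p - 1) = 0 by lra.
have hz : forall q, (v 0 q) ^+ 2 * (gr q q - 1) = 0.
  move=> q; apply: (psumr_eq0P _ hs) => // r _.
  by apply: mulr_ge0; [exact: sqr_ge0| rewrite subr_ge0 ltW].
apply/rowP => p; rewrite mxE.
move/eqP: (hz p); rewrite mulf_eq0 sqrf_eq0 subr_eq0 => /orP[/eqP //|/eqP e].
by have := H2 p; rewrite e ltxx.
Qed.

Lemma gram_row_free : row_free A.
Proof.
rewrite -kermx_eq0; apply/eqP/row_matrixP => i.
by rewrite row0; apply: ker_triv; rewrite -row_mul mulmx_ker row0.
Qed.

End Gram.
Section Sq.
Variables (n : nat) (A : 'M[rat]_n).
Hypothesis H1 : forall p q, p != q -> gr A p q = 1.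
Hypothesis H2 : forall p, 1 < gr A p p.
Let d x := gr A x x - 1.
Let beta i := \sum_x A x i / d x.
Let c := 1 + \sum_x (d x)^-1.

Lemma d_neq0 x : d x != 0.
Proof. by rewrite /d subr_eq0; have := H2 x; case: ltgtP. Qed.

Lemma S1 i y : \sum_j (\sum_x A x i * A x j / d x) * A y j = A y i + beta i.
Proof.
have -> : \sum_j (\sum_x A x i * A x j / d x) * A y j =
   \sum_x A x i / d x * gr A x y.
  rewrite (eq_bigr (fun j => \sum_x A x i * A x j / d x * A y j)); last by move=> j _; rewrite big_distrl.
  rewrite exchange_big /=; apply: eq_bigr => x _; rewrite /gr big_distrr /=.
  by apply: eq_bigr => j _; ring.
rewrite /beta (bigD1 y) //= [X in _ = _ + X](bigD1 y) //= addrA; congr (_ + _).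
  have := d_neq0 y; rewrite /d; move: (gr A y y) => g h.
  by field.
by apply: eq_bigr => x /H1 ->; rewrite mulr1.
Qed.

Lemma S2 y : \sum_j beta j * A y j = c.
Proof.
have -> : \sum_j beta j * A y j = \sum_x (d x)^-1 * gr A x y.
  rewrite (eq_bigr (fun j => \sum_x A x j / d x * A y j)); last by move=> j _; rewrite big_distrl.
  rewrite exchange_big /=; apply: eq_bigr => x _; rewrite /gr big_distrr /=.
  by apply: eq_bigr => j _; ring.
rewrite /c (bigD1 y) //= [X in _ = _ + X](bigD1 y) //= addrA; congr (_ + _).
  have := d_neq0 y; rewrite /d; move: (gr A y y) => g h.
  by field.
by apply: eq_bigr => x /H1 ->; rewrite mulr1.
Qed.

Lemma c_gt0 : 0 < c.
Proof.
rewrite /c; apply: (@lt_le_trans _ _ 1); first by [].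
rewrite lerDl; apply: sumr_ge0 => x _; rewrite invr_ge0 /d subr_ge0 ltW //.
Qed.

Lemma ident i j : \sum_x A x i * A x j / d x - beta i * beta j / c = (i == j)%:R.
Proof.
pose N := \matrix_(i, j) (\sum_x A x i * A x j / d x - beta i * beta j / c - (i == j)%:R).
have hN : N *m A^T = 0.
  apply/matrixP => a y; rewrite !mxE.
  rewrite (eq_bigr (fun b => (\sum_x A x a * A x b / d x) * A y b - beta a / c * (beta b * A y b) - (a == b)%:R * A y b)); last first.
    by move=> b _; rewrite !mxE; ring.
  rewrite !big_split /= !sumrN -big_distrr /= S1 S2.
  rewrite (bigD1 a) //= eqxx mul1r big1 ?addr0; last first.
    by move=> b; rewrite eq_sym => /negbTE ->; rewrite mul0r.
  have := c_gt0; rewrite lt0r => /andP[hc _]; field; exact: hc.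
have uA : A^T \in unitmx.
  by rewrite unitmx_tr -row_free_unit; apply: gram_row_free.
have N0 : N = 0 by rewrite -(mulmxK uA N) hN mul0mx.
by move/matrixP: N0 => /(_ i j); rewrite !mxE => /eqP; rewrite subr_eq0 => /eqP.
Qed.
End Sq.
Section Comb.
Variables (T : finType) (k : nat) (L : 'I_k -> {set T}).
Hypothesis hcard : forall i, #|L i| = k.
Hypothesis hdisj : forall i j : 'I_k, i != j -> forall x y : T, x != y ->
      x \in L i -> y \in L i -> x \in L j -> y \in L j -> False.
Hypothesis hcov : forall x : T, exists i, x \in L i.
Local Notation e := (union_adj L).

Lemma cliqueP Q x y : is_clique e Q -> x \in Q -> y \in Q -> x != y -> e x y.
Proof.
by move/forallP/(_ x)/implyP => h hx hy hxy; move: (h hx) => /forallP/(_ y)/implyP/(_ hy)/implyP/(_ hxy).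
Qed.

Lemma adjP x y : e x y -> x != y /\ exists i, x \in L i /\ y \in L i.
Proof. by case/andP => -> /existsP[i /andP[a b]]; split => //; exists i. Qed.

Lemma Lclique i : is_clique e (L i).
Proof.
apply/forallP => x; apply/implyP => hx; apply/forallP => y; apply/implyP => hy.
by apply/implyP => hxy; rewrite /union_adj hxy /=; apply/existsP; exists i; rewrite hx hy.
Qed.

Definition incA m (f : 'I_m -> T) : 'M[rat]_(m, k) :=
  \matrix_(p, i) ((f p \in L i)%:R).

Lemma natb_ge0 (b : bool) : 0 <= (b%:R : rat).
Proof. by case: b. Qed.

Lemma gram_props m (f : 'I_m -> T) (Q : {set T}) :
  injective f -> (forall p, f p \in Q) -> is_clique e Q ->
  (forall i, ~~ (Q \subset L i)) ->
  (forall p q, p != q -> gr (incA f) p q = 1) /\ (forall p, 1 < gr (incA f) p p).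
Proof.
move=> finj fQ hQ hsub; split.
  move=> p q pq; have fpq : f p != f q by apply: contra pq => /eqP/finj ->.
  have [_ [i0 [h1 h2]]] := adjP (cliqueP hQ (fQ p) (fQ q) fpq).
  rewrite /gr (bigD1 i0) //= !mxE h1 h2 mulr1 big1 ?addr0 // => j ji0.
  rewrite !mxE; case: (boolP (f p \in L j)) => a; last by rewrite mul0r.
  case: (boolP (f q \in L j)) => b; last by rewrite mulr0.
  by case: (hdisj ji0 fpq a b h1 h2).
move=> p; have [i hi] := hcov (f p).
have /subsetPn [z zQ ziL] := hsub i.
have zp : f p != z by apply: contraNneq ziL => <-.
have [_ [j [h1 h2]]] := adjP (cliqueP hQ (fQ p) zQ zp).
have ij : j != i by apply: contraNneq ziL => <-.
rewrite /gr (bigD1 i) //= (bigD1 j) //= !mxE hi h1 mulr1.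
have : 0 <= \sum_(l | (l != i) && (l != j)) incA f p l * incA f p l.
  by apply: sumr_ge0 => l _; rewrite !mxE; apply: mulr_ge0; apply: natb_ge0.
move=> h; rewrite /= (_ : true%:R = 1 :> rat) //; lra.
Qed.

Lemma clique_bound Q : is_clique e Q -> (#|Q| <= k)%N.
Proof.
move=> hQ; rewrite leqNgt; apply/negP => hlt.
have hsub : forall i, ~~ (Q \subset L i).
  move=> i; apply/negP => /subset_leq_card; rewrite hcard leqNgt hlt //.
have [H1 H2] := gram_props (@enum_val_inj _ (mem Q)) (fun p => enum_valP p) hQ hsub.
have := gram_row_free H1 H2; rewrite /row_free => /eqP hr.
by have := rank_leq_col (incA (@enum_val _ (mem Q))); rewrite hr leqNgt hlt.
Qed.


Lemma lines_meet Q : is_clique e Q -> #|Q| = k -> (forall i, Q != L i) ->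
  forall i j, i != j -> exists x, [/\ x \in Q, x \in L i & x \in L j].
Proof.
move=> hQ hQk hne i j ij.
have hsub : forall i, ~~ (Q \subset L i).
  move=> l; apply/negP => hs; move: (hne l); rewrite eqEcard hs hcard hQk leqnn.
  by [].
pose f (p : 'I_k) := enum_val (cast_ord (esym hQk) p).
have finj : injective f by move=> p q /enum_val_inj /cast_ord_inj.
have fQ : forall p, f p \in Q by move=> p; apply: enum_valP.
have [H1 H2] := gram_props finj fQ hQ hsub.
have hI := ident H1 H2; rewrite /= in hI.
set A := incA f in hI H1 H2.
have Dpos : forall x, 0 < gr A x x - 1 by move=> x; rewrite subr_gt0.
set c := 1 + _ in hI.
have cpos : 0 < c.
  rewrite /c; apply: (@lt_le_trans _ _ 1); first by [].
  by rewrite lerDl; apply: sumr_ge0 => x _; rewrite invr_ge0 ltW.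
have Age0 : forall p l, 0 <= A p l by move=> p l; rewrite !mxE natb_ge0.
case: (boolP [exists p, (f p \in L i) && (f p \in L j)]).
  by case/existsP => p /andP[a b]; exists (f p); split.
rewrite negb_exists => /forallP hno.
have h0 : forall p, A p i * A p j = 0.
  move=> p; rewrite !mxE; move: (hno p); rewrite negb_and.
  by case/orP => /negbTE ->; rewrite ?mul0r ?mulr0.
have hb : forall l, \sum_x A x l / (gr A x x - 1) = 0 -> False.
  move=> l hl.
  have z : forall x, A x l = 0.
    move=> x; have : A x l / (gr A x x - 1) = 0.
      apply: (psumr_eq0P (P := predT) (F := fun x => A x l / (gr A x x - 1))) => // y _.
      by apply: divr_ge0 => //; apply: ltW.
    by move/eqP; rewrite mulf_eq0 invr_eq0 (negbTE (lt0r_neq0 (Dpos x))) orbF => /eqP.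
  have := hI l l; rewrite eqxx hl big1 => [|x _]; last by rewrite z !mul0r.
  rewrite (_ : true%:R = 1 :> rat) // !(mul0r, mulr0) subr0 => /eqP.
  by rewrite eq_sym oner_eq0.
have := hI i j; rewrite (negbTE ij) big1; last by move=> x _; rewrite h0 mul0r.
rewrite (_ : false%:R = 0 :> rat) // sub0r => /eqP; rewrite oppr_eq0 !mulf_eq0 invr_eq0 (negbTE (lt0r_neq0 cpos)) orbF.
by case/orP => /eqP /hb.
Qed.


Lemma one_line Q : is_clique e Q -> #|Q| = k -> (forall i, Q != L i) ->
  forall v, v \notin Q -> forall i j, v \in L i -> v \in L j -> i = j.
Proof.
move=> hQ hQk hne v vQ i j vi vj; apply/eqP; apply/negP => /negP ij.
have [x [xQ xi xj]] := lines_meet hQ hQk hne ij.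
have xv : x != v by apply: contraNneq vQ => <-.
exact: (hdisj ij xv xi vi xj vj).
Qed.

Lemma simplicial Q : is_clique e Q -> #|Q| = k -> (forall i, Q != L i) ->
  forall v a b, v \notin Q -> e v a -> e v b -> a != b -> e a b.
Proof.
move=> hQ hQk hne v a b vQ /adjP[_ [i [vi ai]]] /adjP[_ [j [vj bj]]] ab.
have eij := one_line hQ hQk hne vQ vi vj; subst j.
by rewrite /union_adj ab /=; apply/existsP; exists i; rewrite ai bj.
Qed.

Lemma chordal_of Q : is_clique e Q -> #|Q| = k -> (forall i, Q != L i) ->
  chordal e.
Proof.
move=> hQ hQk hne s [h4 hu hc].
have [x0 _] : exists x0 : T, True by case: s h4 {hu hc} => [//|x ?]; exists x.
set n := size s in h4 hc.
have E := hc x0.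
have hsimp := simplicial hQ hQk hne.
have dist : forall i j, (i < n)%N -> (j < n)%N -> i != j -> nth x0 s i != nth x0 s j.
  by move=> i j hi hj; rewrite nth_uniq.
have l0 : (0 < n)%N by lia.
have l1 : (1 < n)%N by lia.
have l2 : (2 < n)%N by lia.
have l3 : (3 < n)%N by lia.
have ln : (n.-1 < n)%N by lia.
have m1 : (1 %% n = 1)%N by rewrite modn_small.
have m2 : (2 %% n = 2)%N by rewrite modn_small.
have m3 : (3 %% n = 3)%N by rewrite modn_small.
have mn : (n.-1.+1 %% n = 0)%N by rewrite prednK // modnn.
have m4 : (1 == 4 %% n)%N = false.
  by apply/negbTE; case: (ltngtP 4 n) => h; [rewrite modn_small | lia | rewrite -h modnn].
have n02 : ~~ e (nth x0 s 0) (nth x0 s 2) by rewrite E // m1; lia.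
have n13 : ~~ e (nth x0 s 1) (nth x0 s 3) by rewrite E // m2 m4; lia.
have n1n : ~~ e (nth x0 s 1) (nth x0 s n.-1).
  rewrite E // m2 mn; apply/negP => /orP[/eqP|//]; lia.
case: (boolP (nth x0 s 1 \in Q)) => q1; last first.
  by move/negP: n02; apply; apply: (hsimp _ _ _ q1); rewrite ?E ?m1 ?m2 ?eqxx ?orbT //; apply: dist.
case: (boolP (nth x0 s 0 \in Q)) => q0; last first.
  move/negP: n1n; apply; apply: (hsimp _ _ _ q0); rewrite ?E ?m1 ?mn ?eqxx ?orbT //.
  by apply: dist => //; lia.
case: (boolP (nth x0 s 2 \in Q)) => q2; last first.
  by move/negP: n13; apply; apply: (hsimp _ _ _ q2); rewrite ?E ?m3 ?m2 ?eqxx ?orbT //; apply: dist.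
by move/negP: n02; apply; apply: (cliqueP hQ q0 q2); apply: dist.
Qed.

End Comb.
End All.

Theorem lemma3p4 (T : finType) (k : nat) (L : 'I_k -> {set T}) :
  0 < k ->
  (forall i, #|L i| = k) ->
  (forall i j : 'I_k, i != j -> forall x y : T, x != y ->
      x \in L i -> y \in L i -> x \in L j -> y \in L j -> False) ->
  (forall x : T, exists i, x \in L i) ->
  clique_number (union_adj L) = k /\
  ((exists Q : {set T}, [/\ maximal_clique (union_adj L) Q, #|Q| = k &
                            forall i, Q != L i]) ->
   chordal (union_adj L)).
Proof.
move=> hk hcard hdisj hcov; split.
  apply/eqP; rewrite eqn_leq; apply/andP; split.
    by apply/bigmax_leqP => Q; apply: clique_bound.
  rewrite -{1}(hcard (Ordinal hk)); apply: leq_bigmax_cond; exact: Lclique.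
case=> Q [/andP[hQ _] hQk hne].
exact: (chordal_of hcard hdisj hcov hQ hQk hne).
Qed.
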